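(* Let $p$ be a prime. Then $\mathcal{M}_p^{(1)}\subseteq p\cdot\mathcal{N}_p=\{pm : m\in\mathcal{N}_p\}$.
   Context: For positive integers $k,n$ let $S_k(n)=\sum_{i=1}^{n} i^k$. For an integer $a$, $\mathcal{M}_a$ denotes the set of positive integers $n$ such that $S_n(n)\equiv a\pmod{n}$. For a prime $p$, $\mathcal{M}_p^{(1)}=\{n\in\mathcal{M}_p : p\mid n,\ p^2\nmid n\}$. For a prime $p$, the set of primes $\mathcal{Q}_p$ is defined recursively (by induction on $q$, since prime divisors of $q-1$ are smaller than $q$): a prime $q$ belongs to $\mathcal{Q}_p$ if and only if (a) $q-1$ is square-free, (b) $p-1\nmid q-1$, and (c) every prime divisor $t$ of $q-1$ satisfies $t=p$ or $t\in\mathcal{Q}_p$. Further, $\mathcal{N}_p$ is the set of positive integers $n$ that are square-free, satisfy $p-1\nmid n$, and all of whose prime divisors lie in $\mathcal{Q}_p$. *)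

(* Defs.v *)
From mathcomp Require Import all_boot.
Set Implicit Arguments. Unset Strict Implicit. Unset Printing Implicit Defensive.

Definition S (k n : nat) : nat := \sum_(1 <= i < n.+1) i ^ k.

Definition squarefree (n : nat) : bool :=
  [forall d : 'I_n.+1, (1 < d) ==> ~~ (d * d %| n)].

Definition inM (a n : nat) : Prop := 0 < n /\ S n n = a %[mod n].

Definition inM1 (p n : nat) : Prop := inM p n /\ p %| n /\ ~~ (p * p %| n).

(* Q_p defined by recursion with fuel; fuel q suffices since prime
   divisors of q-1 are < q. *)
Fixpoint inQ_fuel (p fuel q : nat) : bool :=
  match fuel with
  | 0 => false
  | k.+1 => [&& prime q, squarefree q.-1, ~~ (p.-1 %| q.-1) &
             all (fun t => (t == p) || inQ_fuel p k t) (primes q.-1)]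
  end.

Definition inQ (p q : nat) : bool := inQ_fuel p q q.

Definition inN (p n : nat) : Prop :=
  0 < n /\ squarefree n /\ ~~ (p.-1 %| n) /\ all (inQ p) (primes n).

(* Main.v *)
Require Import Defs.
From mathcomp Require Import all_boot all_algebra.
From mathcomp Require Import zify.
Set Implicit Arguments. Unset Strict Implicit. Unset Printing Implicit Defensive.
Import GRing.Theory.

Lemma roots_bound (q r : nat) : prime q -> 0 < r ->
  (forall a, 0 < a < q -> a ^ r = 1 %[mod q]) -> q.-1 <= r.
Proof.
move=> pq r0 H.
have q1 : 1 < q := prime_gt1 pq.
pose rs := [seq (a%:R : 'F_q)%R | a <- iota 1 q.-1].
have P0 : ((('X^r - 1) : {poly 'F_q}) != 0)%R.
  by rewrite -size_poly_eq0 size_Xn_sub_1.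
have := max_poly_roots (rs := rs) P0.
rewrite size_Xn_sub_1 // size_map size_iota ltnS; apply.
- apply/allP => x /mapP [a]; rewrite mem_iota => /andP [a1 a2] ->.
  rewrite /root !hornerE -natrX -Fp_nat_mod // H; last first.
    by apply/andP; split; lia.
  by rewrite modn_small // subrr.
- rewrite map_inj_in_uniq ?iota_uniq // => a b; rewrite !mem_iota => /andP [a1 a2] /andP [b1 b2] E.
  have := congr1 (@nat_of_ord _) E.
  rewrite !val_Fp_nat // !modn_small //; lia.
Qed.

From mathcomp Require Import cyclic.

Lemma modFp (q x y : nat) : prime q -> (x = y %[mod q]) <-> ((x%:R : 'F_q) = y%:R)%R.
Proof.
move=> pq; split => E.
  by rewrite -(Fp_nat_mod pq x) E Fp_nat_mod.
by have := congr1 (@nat_of_ord _) E; rewrite !val_Fp_nat.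
Qed.

Lemma sum_perm (q k a : nat) : prime q -> 0 < a < q ->
  \sum_(i < q) ((a * i) %% q) ^ k = \sum_(i < q) i ^ k.
Proof.
move=> pq /andP [a0 aq].
have q0 : 0 < q := prime_gt0 pq.
pose h := fun i : 'I_q => Ordinal (ltn_pmod (a * i) q0).
have hinj : injective h.
  move=> i j /(congr1 (@nat_of_ord _)) /= /(modFp _ _ pq).
  rewrite !natrM => /GRing.mulfI.
  have an0 : (a%:R : 'F_q)%R != 0%R.
    apply/eqP => /(modFp a 0 pq); rewrite mod0n modn_small //; lia.
  move=> /(_ an0) /(modFp _ _ pq); rewrite !modn_small //.
  by move=> E; apply: ord_inj.
by rewrite [RHS](reindex_inj hinj).
Qed.

Lemma sum_pow_nonzero (q k : nat) : prime q -> 0 < k ->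
  ~~ (q %| \sum_(i < q) i ^ k) -> q.-1 %| k.
Proof.
move=> pq k0 nd.
have q1 : 1 < q := prime_gt1 pq.
set T := \sum_(i < q) i ^ k in nd.
have Tn0 : (T%:R : 'F_q)%R != 0%R.
  apply/negP => /eqP E.
  have := proj2 (modFp T 0 pq) E; rewrite mod0n => /eqP.
  by rewrite -/(q %| T) (negbTE nd).
have step : forall a, 0 < a < q -> a ^ k = 1 %[mod q].
  move=> a Ha.
  have E1 : a ^ k * T = T %[mod q].
    rewrite /T big_distrr /= -modn_summ -(sum_perm k pq Ha) -[in RHS]modn_summ.
    congr (_ %% q); apply: eq_bigr => i _.
    by rewrite -expnMn modnXm.
  move/(modFp _ _ pq): E1; rewrite natrM -{2}(GRing.mul1r (T%:R)%R).
  move=> /(GRing.mulIf Tn0) E2.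
  by apply/(modFp _ _ pq).
have ferm : forall a, 0 < a < q -> a ^ q.-1 = 1 %[mod q].
  move=> a /andP [a0 aq]; rewrite -totient_prime //; apply: Euler_exp_totient.
  rewrite coprime_sym prime_coprime //; apply/negP => /dvdn_leq; lia.
set r := k %% q.-1.
have Hr : forall a, 0 < a < q -> a ^ r = 1 %[mod q].
  move=> a Ha; apply/(modFp _ _ pq).
  have := step a Ha; move/(modFp _ _ pq).
  rewrite {1}(divn_eq k q.-1) (mulnC (k %/ q.-1)) expnD expnM natrM natrX.
  have := ferm a Ha; move/(modFp _ _ pq) => ->.
  by rewrite GRing.expr1n GRing.mul1r.
case: (posnP r) => [r0|rpos].
  by apply/dvdnP; exists (k %/ q.-1); rewrite {1}(divn_eq k q.-1) -/r r0 addn0.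
have := roots_bound pq rpos Hr.
have : r < q.-1 by rewrite /r ltn_mod; lia.
lia.
Qed.

Lemma sum_block (q k c : nat) : 0 < k ->
  \sum_(0 <= i < c * q) i ^ k = c * \sum_(i < q) i ^ k %[mod q].
Proof.
move=> k0; rewrite -(big_mkord xpredT (fun i => i ^ k)).
elim: c => [|c IH]; first by rewrite mul0n big_geq.
rewrite mulSn addnC (@big_cat_nat _ _ _ (c * q)) ?leq_addr //=.
have HB : \sum_(c * q <= i < c * q + q) i ^ k = \sum_(0 <= i < q) i ^ k %[mod q].
  rewrite -{1}(add0n (c * q)) big_addn addKn -modn_summ -[in RHS]modn_summ.
  congr (_ %% q); apply: eq_bigr => i _.
  by rewrite -modnXm addnC modnMDl modnXm.
by rewrite -modnDm IH HB modnDm mulSn addnC.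
Qed.

Lemma S_mod (q k n : nat) : 0 < k -> 0 < q -> q %| n ->
  S k n = (n %/ q) * \sum_(i < q) i ^ k %[mod q].
Proof.
move=> k0 q0 qn.
rewrite /S.
have -> : \sum_(1 <= i < n.+1) i ^ k = \sum_(0 <= i < n) i ^ k + n ^ k.
  by rewrite -big_nat_recr //= [in RHS]big_ltn // exp0n.
rewrite -modnDm.
have -> : n ^ k %% q = 0.
  by apply/eqP; rewrite -/(q %| n ^ k); apply: dvdn_exp.
rewrite addn0 modn_mod -sum_block //.
by rewrite divnK.
Qed.

Lemma sum_fermat (p k : nat) : prime p -> 0 < k -> p.-1 %| k ->
  \sum_(i < p) i ^ k = p.-1 %[mod p].
Proof.
move=> pp k0 /dvdnP [c ck]; rewrite ck in k0 *.
have p1 := prime_gt1 pp.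
rewrite -(big_mkord xpredT (fun i => i ^ _)) big_ltn ?prime_gt0 // exp0n ?add0n //.
rewrite -modn_summ.
rewrite (eq_big_nat _ _ (F2 := fun _ => 1)); last first.
  move=> i /andP [i1 ip].
  rewrite mulnC expnM -modnXm.
  have -> : i ^ p.-1 %% p = 1.
    rewrite -totient_prime // Euler_exp_totient ?modn_small //.
    rewrite coprime_sym prime_coprime //; apply/negP => /dvdn_leq; lia.
  by rewrite exp1n modn_small.
rewrite sum_nat_const_nat muln1 subn1.
by rewrite ?modn_mod.
Qed.

Definition good (x : nat) := forall q, prime q -> ~~ (q * q %| x).

Lemma good_sqf x : good x -> squarefree x.
Proof.
move=> g; apply/forallP => d; apply/implyP => d1; apply/negP => dd.
have pd := pdiv_prime d1.
have := g _ pd; rewrite (dvdn_trans _ dd) //.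
by apply: dvdn_mul; apply: pdiv_dvd.
Qed.

Lemma good_div d x : d %| x -> good x -> good d.
Proof.
move=> dx g q pq; apply/negP => qd.
by have := g q pq; rewrite (dvdn_trans qd dx).
Qed.

Theorem mainTheorem4 (p : nat) (hp : prime p) (n : nat) :
  inM1 p n -> exists m, inN p m /\ n = p * m.
Proof.
move=> [[n0 Hs] [pn npp]].
have p1 := prime_gt1 hp.
set m := n %/ p.
have nE : n = p * m by rewrite /m mulnC divnK.
have Hd : forall d, d %| n -> S n n = p %[mod d].
  by move=> d dn; rewrite -(modn_dvdm _ dn) Hs modn_dvdm.
have pm : ~~ (p %| m).
  by apply/negP => /dvdnP [c mc]; move: npp; rewrite nE mc mulnA mulnAC dvdn_mulr.
have F1 : ~~ (p.-1 %| n).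
  apply/negP => dn.
  have := Hd p pn; rewrite (S_mod n0 (prime_gt0 hp) pn) modnn.
  rewrite -modnMmr sum_fermat // -/m (@modn_small p.-1 p); last by rewrite ltn_predL prime_gt0.
  move=> /eqP E; have : p %| m * p.-1 by [].
  rewrite Euclid_dvdM // (negbTE pm) /= => /dvdn_leq.
  have h : 0 < p.-1 by rewrite -subn1 subn_gt0.
  by move/(_ h); rewrite leqNgt ltn_predL prime_gt0.
have F2 : forall q, prime q -> q %| n -> q != p -> ~~ (q * q %| n) /\ q.-1 %| n.
  move=> q pq qn qp.
  have q0 := prime_gt0 pq.
  have Hq := Hd q qn; rewrite (S_mod n0 q0 qn) in Hq.
  have pq0 : p %% q != 0.
    rewrite -/(q %| p) dvdn_prime2 //.
  split.
    apply/negP => /dvdnP [c nc].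
    have ndq : n %/ q = c * q by rewrite nc mulnA mulnK.
    move: Hq; rewrite ndq -mulnA mulnCA modnMr.
    by move=> E; move: pq0; rewrite -E.
  apply: sum_pow_nonzero => //.
  apply/negP => /dvdnP [c Tc]; move: Hq; rewrite Tc mulnA modnMl => E.
  by move: pq0; rewrite -E.
have gn : good n.
  move=> q pq; case: (eqVneq q p) => [->|qp] //.
  have [qn|qn] := boolP (q %| n).
    by case: (F2 q pq qn qp).
  apply/negP => qqn; move/negP: qn; apply; exact: dvdn_trans (dvdn_mulr _ _) qqn.
have mn : m %| n by rewrite nE dvdn_mull.
exists m; split => //; split; first by rewrite lt0n; apply/eqP => m0; move: n0; rewrite nE m0 muln0.
split; first by apply: good_sqf; apply: good_div mn gn.
split.
  by apply/negP => /dvdn_trans /(_ mn); apply/negP.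
have claim : forall f q, q <= f -> prime q -> q %| n -> q != p -> inQ_fuel p f q.
  elim=> [|f IH] q qf pq qn qp.
    by move: (prime_gt0 pq); rewrite leqn0 in qf; rewrite (eqP qf).
  have [_ q1n] := F2 q pq qn qp.
  have q10 : 0 < q.-1 by rewrite -subn1 subn_gt0 prime_gt1.
  rewrite /= pq /=; apply/and3P; split.
  - by apply: good_sqf; apply: good_div q1n gn.
  - by apply/negP => /dvdn_trans /(_ q1n); apply/negP.
  - apply/allP => t; rewrite mem_primes => /and3P [pt _ tq].
    case: (eqVneq t p) => [//|tp] /=.
    apply: IH => //; last exact: dvdn_trans tq q1n.
    apply: leq_trans (dvdn_leq q10 tq) _; rewrite -ltnS prednK ?prime_gt0 //.
apply/allP => q; rewrite mem_primes => /and3P [pq _ qm].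
apply: claim => //; first exact: dvdn_trans qm mn.
by apply/negP => /eqP qp; move: pm; rewrite -qp qm.
Qed.
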